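(* Let $q>0$ and let $u\in C^{4}(\mathbb{R}^{2})$, $u>0$, solve $\Delta^{2}u+u^{-q}=0$ in $\mathbb{R}^{2}$. Then for all $r>0$: $\bar u'(r)>0$, $\bar u''(r)>0$, $\bar u'''(r)<0$, and $\bar w'(r)<0$.
   Context: $w:=\Delta u$. For a function $f$ on $\mathbb{R}^{2}$, $\bar f(r)$ denotes its spherical average over $\partial B_{r}(0)$ ($\bar f(0)=f(0)$); derivatives are with respect to $r$. *)

(* Defs.v *)
From Stdlib Require Import Reals List.
From Coquelicot Require Import Coquelicot.
Open Scope R_scope.

Definition Dx (f : R -> R -> R) : R -> R -> R :=
  fun x y => Derive (fun t => f t y) x.
Definition Dy (f : R -> R -> R) : R -> R -> R :=
  fun x y => Derive (fun t => f x t) y.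

(* Iterated partial derivative along a list of directions
   (true = d/dx, false = d/dy); the head is applied last. *)
Fixpoint pd (l : list bool) (f : R -> R -> R) : R -> R -> R :=
  match l with
  | nil => f
  | b :: l' => (if b then Dx else Dy) (pd l' f)
  end.

Definition Ck (k : nat) (f : R -> R -> R) : Prop :=
  (forall l : list bool, (length l < k)%nat -> forall x y : R,
      ex_derive (fun t => pd l f t y) x /\ ex_derive (fun t => pd l f x t) y) /\
  (forall l : list bool, (length l <= k)%nat -> forall p : R * R,
      continuous (fun q : R * R => pd l f (fst q) (snd q)) p).

Definition Lap (f : R -> R -> R) : R -> R -> R :=
  fun x y => Dx (Dx f) x y + Dy (Dy f) x y.

(* Spherical (circular) average of f over the circle of radius r centered
   at 0; for r = 0 this is f 0 0. *)
Definition sph_avg (f : R -> R -> R) (r : R) : R :=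
  RInt (fun th => f (r * cos th) (r * sin th)) 0 (2 * PI) / (2 * PI).

(* Main.v *)
From Pilot Require Import Defs.
From Stdlib Require Import Reals Lra Lia List FunctionalExtensionality.
From Coquelicot Require Import Coquelicot.
Import Pilot.Defs.
Open Scope R_scope.
Import ListNotations.

Definition cont2 (h : R -> R -> R) : Prop :=
  forall p : R * R, continuous (fun q : R * R => h (fst q) (snd q)) p.

Lemma cont2_comp h f g : cont2 h -> cont2 f -> cont2 g ->
  cont2 (fun r t => h (f r t) (g r t)).
Proof.
  intros Hh Hf Hg p.
  apply (continuous_comp_2 (fun q : R*R => f (fst q) (snd q))
                           (fun q : R*R => g (fst q) (snd q)) h).
  - apply Hf. - apply Hg. - apply Hh.
Qed.

Lemma cont2_fst : cont2 (fun r t => r).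
Proof. intros [a b]. apply continuous_fst. Qed.
Lemma cont2_snd : cont2 (fun r t => t).
Proof. intros [a b]. apply continuous_snd. Qed.
Lemma cont2_const c : cont2 (fun r t => c).
Proof. intros p. apply continuous_const. Qed.
Lemma cont2_plus f g : cont2 f -> cont2 g -> cont2 (fun r t => f r t + g r t).
Proof.
  intros Hf Hg. apply (cont2_comp Rplus); auto.
  intros [a b]. apply (continuous_plus (fun q : R*R => fst q) (fun q : R*R => snd q)).
  apply continuous_fst. apply continuous_snd.
Qed.
Lemma cont2_mult f g : cont2 f -> cont2 g -> cont2 (fun r t => f r t * g r t).
Proof.
  intros Hf Hg. apply (cont2_comp Rmult); auto.
  intros [a b]. apply (continuous_mult (fun q : R*R => fst q) (fun q : R*R => snd q)).
  apply continuous_fst. apply continuous_snd.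
Qed.
Lemma cont2_opp f : cont2 f -> cont2 (fun r t => - f r t).
Proof.
  intros Hf. replace (fun r t => - f r t) with (fun r t => (-1) * f r t).
  apply cont2_mult; auto. apply cont2_const.
  do 2 (apply functional_extensionality; intro). ring.
Qed.
Lemma cont2_fun1 (h : R -> R) f : (forall x, continuous h x) -> cont2 f -> cont2 (fun r t => h (f r t)).
Proof.
  intros Hh Hf p. apply (continuous_comp (fun q : R*R => f (fst q) (snd q)) h).
  apply Hf. apply Hh.
Qed.
Lemma cont2_cos : cont2 (fun r t => cos t).
Proof. apply (cont2_fun1 cos (fun r t => t)). intro x. apply continuous_cos. apply cont2_snd. Qed.
Lemma cont2_sin : cont2 (fun r t => sin t).
Proof. apply (cont2_fun1 sin (fun r t => t)). intro x. apply continuous_sin. apply cont2_snd. Qed.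
Lemma cont2_polar h : cont2 h -> cont2 (fun r t => h (r * cos t) (r * sin t)).
Proof.
  intros Hh. apply cont2_comp; auto.
  apply cont2_mult. apply cont2_fst. apply cont2_cos.
  apply cont2_mult. apply cont2_fst. apply cont2_sin.
Qed.
Lemma cont2_t h r t : cont2 h -> continuous (fun t => h r t) t.
Proof.
  intros Hh. apply (continuous_comp_2 (fun _ => r) (fun t => t) h).
  apply continuous_const. apply continuous_id. apply Hh.
Qed.
Lemma cont2_2d h x y : cont2 h -> continuity_2d_pt h x y.
Proof. intros Hh. apply continuity_2d_pt_filterlim. apply (Hh (x,y)). Qed.

Lemma diff2 (v : R -> R -> R) x y : (forall a b, ex_derive (fun t => v t b) a) ->
  ex_derive (fun t => v x t) y -> cont2 (Dx v) ->
  differentiable_pt_lim v x y (Dx v x y) (Dy v x y).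
Proof.
  intros H1 H2 H3. apply filterdiff_differentiable_pt_lim.
  eapply filterdiff_ext_lin.
  apply (is_derive_filterdiff v x y (Dx v) (Dy v x y)).
  - apply filter_forall. intros [a b]. simpl. apply Derive_correct. apply H1.
  - apply Derive_correct. apply H2.
  - apply (H3 (x,y)).
  - intros [a b]. simpl. unfold plus, scal; simpl. unfold mult; simpl. ring.
Qed.

Lemma polar_r (v : R -> R -> R) r t : (forall a b, ex_derive (fun t => v t b) a /\ ex_derive (fun t => v a t) b) ->
  cont2 (Dx v) ->
  is_derive (fun z => v (z * cos t) (z * sin t)) r
   (Dx v (r * cos t) (r * sin t) * cos t + Dy v (r * cos t) (r * sin t) * sin t).
Proof.
  intros H H3. apply is_derive_Reals.
  apply (derivable_pt_lim_comp_2d v (fun z => z * cos t) (fun z => z * sin t) r (Dx v (r * cos t) (r * sin t)) (Dy v (r * cos t) (r * sin t)) (cos t) (sin t)).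
  apply diff2. intros a b; exact (proj1 (H a b)). exact (proj2 (H _ _)). exact H3.
  apply is_derive_Reals. auto_derive. auto. ring.
  apply is_derive_Reals. auto_derive. auto. ring.
Qed.

Lemma polar_t (v : R -> R -> R) r t : (forall a b, ex_derive (fun t => v t b) a /\ ex_derive (fun t => v a t) b) ->
  cont2 (Dx v) ->
  is_derive (fun z => v (r * cos z) (r * sin z)) t
   (Dx v (r * cos t) (r * sin t) * (- (r * sin t)) + Dy v (r * cos t) (r * sin t) * (r * cos t)).
Proof.
  intros H H3. apply is_derive_Reals.
  apply (derivable_pt_lim_comp_2d v (fun z => r * cos z) (fun z => r * sin z) t (Dx v (r * cos t) (r * sin t)) (Dy v (r * cos t) (r * sin t)) (- (r * sin t)) (r * cos t)).
  apply diff2. intros a b; exact (proj1 (H a b)). exact (proj2 (H _ _)). exact H3.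
  apply is_derive_Reals. auto_derive. auto. ring.
  apply is_derive_Reals. auto_derive. auto. ring.
Qed.

Lemma deriv_param (g dg : R -> R -> R) r : cont2 g -> cont2 dg ->
  (forall r t, is_derive (fun z => g z t) r (dg r t)) ->
  is_derive (fun r => RInt (fun t => g r t) 0 (2*PI)) r (RInt (fun t => dg r t) 0 (2*PI)).
Proof.
  intros Hg Hdg Hd.
  assert (E : (fun u v => Derive (fun z => g z v) u) = dg).
  { do 2 (apply functional_extensionality; intro). apply is_derive_unique. apply Hd. }
  replace (RInt (fun t => dg r t) 0 (2*PI)) with (RInt (fun t => Derive (fun u => g u t) r) 0 (2*PI)).
  2:{ apply RInt_ext. intros. apply is_derive_unique. apply Hd. }
  apply (is_derive_RInt_param g).
  - apply filter_forall. intros. eexists. apply Hd.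
  - intros. rewrite E. apply cont2_2d; auto.
  - apply filter_forall. intros. apply (@ex_RInt_continuous R_CompleteNormedModule). intros. apply cont2_t; auto.
Qed.

Lemma isd_mult (f g : R -> R) x df dg : is_derive f x df -> is_derive g x dg ->
  is_derive (fun t => f t * g t) x (df * g x + f x * dg).
Proof. intros H1 H2. exact (is_derive_mult f g x df dg H1 H2 Rmult_comm). Qed.
Lemma isd_plus (f g : R -> R) x df dg : is_derive f x df -> is_derive g x dg ->
  is_derive (fun t => f t + g t) x (df + dg).
Proof. intros H1 H2. exact (is_derive_plus f g x df dg H1 H2). Qed.
Lemma isd_eq (f : R -> R) (x l l' : R) : is_derive f x l -> l = l' -> is_derive f x l'.
Proof. intros H E; subst; exact H. Qed.
Lemma isd_const (c x : R) : is_derive (fun _ => c) x 0.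
Proof. apply (is_derive_const c x). Qed.
Lemma isd_divc (f : R -> R) x df c : is_derive f x df ->
  is_derive (fun t => f t / c) x (df / c).
Proof.
  intros H. unfold Rdiv.
  eapply is_derive_ext. intro t. apply Rmult_comm.
  replace (df * / c) with (/ c * df) by ring. apply is_derive_scal. exact H.
Qed.

Definition exd (v : R -> R -> R) : Prop :=
  forall a b, ex_derive (fun t => v t b) a /\ ex_derive (fun t => v a t) b.

Record C2 (v : R -> R -> R) : Prop := {
  c2d : exd v; c2dx : exd (Dx v); c2dy : exd (Dy v);
  c2c0 : cont2 v; c2c1 : cont2 (Dx v); c2c2 : cont2 (Dy v);
  c2c11 : cont2 (Dx (Dx v)); c2c12 : cont2 (Dy (Dx v));
  c2c21 : cont2 (Dx (Dy v)); c2c22 : cont2 (Dy (Dy v)) }.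

Definition polar (h : R -> R -> R) (r t : R) := h (r * cos t) (r * sin t).
Definition g1 v r t := polar (Dx v) r t * cos t + polar (Dy v) r t * sin t.
Definition g2 v r t :=
  (polar (Dx (Dx v)) r t * cos t + polar (Dy (Dx v)) r t * sin t) * cos t +
  (polar (Dx (Dy v)) r t * cos t + polar (Dy (Dy v)) r t * sin t) * sin t.
Definition A1 v r := RInt (fun t => g1 v r t) 0 (2*PI) / (2*PI).
Definition A2 v r := RInt (fun t => g2 v r t) 0 (2*PI) / (2*PI).

Lemma cont2_p h : cont2 h -> cont2 (polar h).
Proof. intros H. unfold polar. apply (cont2_polar h H). Qed.

Ltac c2 := repeat match goal with
 | |- cont2 (fun r t => _ + _) => apply cont2_plus
 | |- cont2 (fun r t => _ * _) => apply cont2_mult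
 | |- cont2 (fun r t => - _) => apply cont2_opp
 | |- cont2 (fun r t => cos t) => apply cont2_cos
 | |- cont2 (fun r t => sin t) => apply cont2_sin
 | |- cont2 (fun r t => r) => apply cont2_fst
 | |- cont2 (fun r t => polar _ r t) => apply cont2_p
 | |- cont2 (polar _) => apply cont2_p
 end.

Lemma cont2_g1 v : C2 v -> cont2 (g1 v).
Proof.
  intros C. unfold g1. c2; apply C.
Qed.
Lemma cont2_g2 v : C2 v -> cont2 (g2 v).
Proof.
  intros C. unfold g2.
  c2; apply C.
Qed.

Lemma d_g0 v r t : C2 v -> is_derive (fun z => polar v z t) r (g1 v r t).
Proof. intros C. unfold polar, g1, polar. apply polar_r. apply C. apply C. Qed.

Lemma d_g1 v r t : C2 v -> is_derive (fun z => g1 v z t) r (g2 v r t).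
Proof.
  intros C. unfold g1, g2.
  apply isd_plus.
  - eapply isd_eq; [apply (isd_mult (fun z => polar (Dx v) z t) (fun _ => cos t)); [unfold polar; apply polar_r; apply C | apply isd_const] | unfold polar; ring].
  - eapply isd_eq; [apply (isd_mult (fun z => polar (Dy v) z t) (fun _ => sin t)); [unfold polar; apply polar_r; apply C | apply isd_const] | unfold polar; ring].
Qed.

Lemma L1 v r : C2 v -> is_derive (sph_avg v) r (A1 v r).
Proof.
  intros C. unfold sph_avg, A1. apply isd_divc.
  pose proof (deriv_param (polar v) (g1 v) r (cont2_p v (c2c0 v C)) (cont2_g1 v C)
     (fun r t => d_g0 v r t C)) as H.
  unfold polar in H at 1. exact H.
Qed.

Lemma L2 v r : C2 v -> is_derive (A1 v) r (A2 v r).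
Proof.
  intros C. unfold A1, A2. apply isd_divc.
  exact (deriv_param (g1 v) (g2 v) r (cont2_g1 v C) (cont2_g2 v C)
     (fun r t => d_g1 v r t C)).
Qed.

Lemma A1_0 v : C2 v -> A1 v 0 = 0.
Proof.
  intros C. unfold A1.
  set (a := Dx v 0 0). set (b := Dy v 0 0).
  assert (E : RInt (fun t => g1 v 0 t) 0 (2*PI) = RInt (fun t => a * cos t + b * sin t) 0 (2*PI)).
  { apply RInt_ext. intros x _. unfold g1, polar, a, b. rewrite !Rmult_0_l. reflexivity. }
  rewrite E.
  assert (H : is_RInt (fun t => a * cos t + b * sin t) 0 (2*PI)
     (minus ((fun t => a * sin t - b * cos t) (2*PI)) ((fun t => a * sin t - b * cos t) 0))).
  { apply (is_RInt_derive (fun t => a * sin t - b * cos t)).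
    - intros x _. auto_derive. auto. ring.
    - intros x _. apply (continuous_plus (fun t => a * cos t) (fun t => b * sin t)).
      apply (continuous_scal_r a cos). apply continuous_cos.
      apply (continuous_scal_r b sin). apply continuous_sin. }
  rewrite (is_RInt_unique _ _ _ _ H). simpl.
  rewrite sin_2PI, cos_2PI, sin_0, cos_0. unfold minus, plus, opp; simpl. field.
  pose proof PI_RGT_0; lra.
Qed.


Definition kk v r t := polar (Dx v) r t * (-(r*sin t)) + polar (Dy v) r t * (r*cos t).
Definition dk v r t :=
  (polar (Dx (Dx v)) r t * (-(r*sin t)) + polar (Dy (Dx v)) r t * (r*cos t)) * (-(r*sin t))
  + polar (Dx v) r t * (-(r*cos t))
  + ((polar (Dx (Dy v)) r t * (-(r*sin t)) + polar (Dy (Dy v)) r t * (r*cos t)) * (r*cos t)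
     + polar (Dy v) r t * (-(r*sin t))).

Lemma d_k v r t : C2 v -> is_derive (kk v r) t (dk v r t).
Proof.
  intros C. unfold kk, dk.
  eapply isd_eq.
  apply isd_plus.
  apply (isd_mult (fun z => polar (Dx v) r z) (fun z => -(r*sin z))).
  unfold polar. apply polar_t; apply C.
  auto_derive; [auto | reflexivity].
  apply (isd_mult (fun z => polar (Dy v) r z) (fun z => (r*cos z))).
  unfold polar. apply polar_t; apply C.
  auto_derive; [auto | reflexivity].
  unfold polar. ring.
Qed.

Lemma cont2_dk v : C2 v -> cont2 (dk v).
Proof. intros C. unfold dk. c2; apply C. Qed.

Lemma cont2_Lap v : C2 v -> cont2 (Lap v).
Proof. intros C. unfold Lap. apply cont2_plus; apply C. Qed.

Lemma exR (h : R -> R -> R) r : cont2 h -> ex_RInt (fun t => h r t) 0 (2*PI).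
Proof. intros H. apply (@ex_RInt_continuous R_CompleteNormedModule). intros. apply cont2_t; auto. Qed.

Lemma L3 v r : C2 v -> r <> 0 -> r * A2 v r + A1 v r = r * sph_avg (Lap v) r.
Proof.
  intros C Hr.
  set (I1 := RInt (fun t => g1 v r t) 0 (2*PI)).
  set (I2 := RInt (fun t => g2 v r t) 0 (2*PI)).
  set (IL := RInt (fun t => polar (Lap v) r t) 0 (2*PI)).
  assert (H1 : is_RInt (fun t => g1 v r t) 0 (2*PI) I1) by (apply (@RInt_correct R_CompleteNormedModule); apply exR; apply cont2_g1, C).
  assert (H2 : is_RInt (fun t => g2 v r t) 0 (2*PI) I2) by (apply (@RInt_correct R_CompleteNormedModule); apply exR; apply cont2_g2, C).
  assert (H3 : is_RInt (fun t => polar (Lap v) r t) 0 (2*PI) IL) by (apply (@RInt_correct R_CompleteNormedModule); apply exR; apply cont2_p, cont2_Lap, C).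
  assert (HA : is_RInt (fun t => r^2 * g2 v r t + r * g1 v r t - r^2 * polar (Lap v) r t) 0 (2*PI)
                 (r^2 * I2 + r * I1 - r^2 * IL)).
  { apply (@is_RInt_minus R_NormedModule (fun t => r^2 * g2 v r t + r * g1 v r t) (fun t => r^2 * polar (Lap v) r t)).
    apply (@is_RInt_plus R_NormedModule (fun t => r^2 * g2 v r t) (fun t => r * g1 v r t)).
    apply (@is_RInt_scal R_NormedModule _ _ _ (r^2)); exact H2.
    apply (@is_RInt_scal R_NormedModule _ _ _ r); exact H1.
    apply (@is_RInt_scal R_NormedModule _ _ _ (r^2)); exact H3. }
  assert (HK : is_RInt (fun t => dk v r t) 0 (2*PI) (minus (kk v r (2*PI)) (kk v r 0))).
  { apply (is_RInt_derive (kk v r)).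
    - intros. apply d_k, C.
    - intros. apply cont2_t. apply cont2_dk, C. }
  assert (K0 : kk v r (2*PI) = kk v r 0).
  { unfold kk, polar. rewrite sin_2PI, cos_2PI, sin_0, cos_0. reflexivity. }
  rewrite K0 in HK.
  apply is_RInt_opp in HK.
  assert (HB : is_RInt (fun t => r^2 * g2 v r t + r * g1 v r t - r^2 * polar (Lap v) r t) 0 (2*PI)
                 (opp (minus (kk v r 0) (kk v r 0)))).
  { eapply is_RInt_ext; [|exact HK].
    intros t _. unfold opp; simpl.
    assert (E : r^2 * g2 v r t + r * g1 v r t - r^2 * polar (Lap v) r t + dk v r t
              = r^2 * (polar (Dx (Dx v)) r t + polar (Dy (Dy v)) r t) * ((sin t)² + (cos t)² - 1)).
    { unfold g1, g2, dk, Lap, polar, Rsqr. ring. }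
    rewrite sin2_cos2 in E. lra. }
  apply (@is_RInt_unique R_CompleteNormedModule) in HA. apply (@is_RInt_unique R_CompleteNormedModule) in HB.
  rewrite HA in HB.
  assert (E0 : r^2*I2 + r*I1 - r^2*IL = 0).
  { rewrite HB. rewrite minus_eq_zero. apply (@opp_zero R_AbelianGroup). }
  unfold A1, A2, sph_avg. fold I1 I2.
  change (RInt (fun th => Lap v (r * cos th) (r * sin th)) 0 (2*PI)) with IL.
  pose proof PI_RGT_0.
  assert (E1 : r * I2 + I1 - r * IL = 0).
  { apply (Rmult_eq_reg_l r); [|exact Hr]. rewrite Rmult_0_r. rewrite <- E0. ring. }
  assert (E2 : r * (I2 / (2*PI)) + I1 / (2*PI) - r * (IL / (2*PI)) = (r*I2 + I1 - r*IL) / (2*PI)) by (field; lra).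
  rewrite E1 in E2. unfold Rdiv in E2. rewrite Rmult_0_l in E2. lra.
Qed.

Lemma Dx_plus (f g : R -> R -> R) : exd f -> exd g ->
  Dx (fun x y => f x y + g x y) = (fun x y => Dx f x y + Dx g x y).
Proof.
  intros Hf Hg. apply functional_extensionality; intro a; apply functional_extensionality; intro b.
  unfold Dx. exact (Derive_plus (fun t => f t b) (fun t => g t b) a (proj1 (Hf a b)) (proj1 (Hg a b))).
Qed.
Lemma Dy_plus (f g : R -> R -> R) : exd f -> exd g ->
  Dy (fun x y => f x y + g x y) = (fun x y => Dy f x y + Dy g x y).
Proof.
  intros Hf Hg. apply functional_extensionality; intro a; apply functional_extensionality; intro b.
  unfold Dy. exact (Derive_plus (fun t => f a t) (fun t => g a t) b (proj2 (Hf a b)) (proj2 (Hg a b))).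
Qed.
Lemma exd_plus (f g : R -> R -> R) : exd f -> exd g -> exd (fun x y => f x y + g x y).
Proof.
  intros Hf Hg a b. split.
  exact (ex_derive_plus (fun t => f t b) (fun t => g t b) a (proj1 (Hf a b)) (proj1 (Hg a b))).
  exact (ex_derive_plus (fun t => f a t) (fun t => g a t) b (proj2 (Hf a b)) (proj2 (Hg a b))).
Qed.


Lemma ckd (u : R -> R -> R) (Hu : Ck 4 u) l : (length l < 4)%nat -> exd (pd l u).
Proof. intros H a b. apply (proj1 Hu l H). Qed.
Lemma ckc (u : R -> R -> R) (Hu : Ck 4 u) l : (length l <= 4)%nat -> cont2 (pd l u).
Proof. intros H p. apply (proj2 Hu l H). Qed.

Lemma C2u (u : R -> R -> R) (Hu : Ck 4 u) : C2 u.
Proof.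
  split.
  - exact (ckd u Hu [] ltac:(simpl; lia)).
  - exact (ckd u Hu [true] ltac:(simpl; lia)).
  - exact (ckd u Hu [false] ltac:(simpl; lia)).
  - exact (ckc u Hu [] ltac:(simpl; lia)).
  - exact (ckc u Hu [true] ltac:(simpl; lia)).
  - exact (ckc u Hu [false] ltac:(simpl; lia)).
  - exact (ckc u Hu [true;true] ltac:(simpl; lia)).
  - exact (ckc u Hu [false;true] ltac:(simpl; lia)).
  - exact (ckc u Hu [true;false] ltac:(simpl; lia)).
  - exact (ckc u Hu [false;false] ltac:(simpl; lia)).
Qed.

Lemma LapE (u : R -> R -> R) (Hu : Ck 4 u) : Lap u = (fun x y => pd [true;true] u x y + pd [false;false] u x y).
Proof. reflexivity. Qed.


Lemma DxL (u : R -> R -> R) (Hu : Ck 4 u) : Dx (Lap u) = (fun x y => pd [true;true;true] u x y + pd [true;false;false] u x y).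
Proof. exact (Dx_plus (pd [true;true] u) (pd [false;false] u) (ckd u Hu [true;true] ltac:(simpl; lia)) (ckd u Hu [false;false] ltac:(simpl; lia))). Qed.
Lemma DyL (u : R -> R -> R) (Hu : Ck 4 u) : Dy (Lap u) = (fun x y => pd [false;true;true] u x y + pd [false;false;false] u x y).
Proof. exact (Dy_plus (pd [true;true] u) (pd [false;false] u) (ckd u Hu [true;true] ltac:(simpl; lia)) (ckd u Hu [false;false] ltac:(simpl; lia))). Qed.

Lemma DxDxL (u : R -> R -> R) (Hu : Ck 4 u) : Dx (Dx (Lap u)) = (fun x y => pd [true;true;true;true] u x y + pd [true;true;false;false] u x y).
Proof.
  transitivity (Dx (fun x y => pd [true;true;true] u x y + pd [true;false;false] u x y)).
  f_equal. exact (DxL u Hu).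
  exact (Dx_plus (pd [true;true;true] u) (pd [true;false;false] u) (ckd u Hu [true;true;true] ltac:(simpl; lia)) (ckd u Hu [true;false;false] ltac:(simpl; lia))).
Qed.

Lemma DyDxL (u : R -> R -> R) (Hu : Ck 4 u) : Dy (Dx (Lap u)) = (fun x y => pd [false;true;true;true] u x y + pd [false;true;false;false] u x y).
Proof.
  transitivity (Dy (fun x y => pd [true;true;true] u x y + pd [true;false;false] u x y)).
  f_equal. exact (DxL u Hu).
  exact (Dy_plus (pd [true;true;true] u) (pd [true;false;false] u) (ckd u Hu [true;true;true] ltac:(simpl; lia)) (ckd u Hu [true;false;false] ltac:(simpl; lia))).
Qed.

Lemma DxDyL (u : R -> R -> R) (Hu : Ck 4 u) : Dx (Dy (Lap u)) = (fun x y => pd [true;false;true;true] u x y + pd [true;false;false;false] u x y).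
Proof.
  transitivity (Dx (fun x y => pd [false;true;true] u x y + pd [false;false;false] u x y)).
  f_equal. exact (DyL u Hu).
  exact (Dx_plus (pd [false;true;true] u) (pd [false;false;false] u) (ckd u Hu [false;true;true] ltac:(simpl; lia)) (ckd u Hu [false;false;false] ltac:(simpl; lia))).
Qed.

Lemma DyDyL (u : R -> R -> R) (Hu : Ck 4 u) : Dy (Dy (Lap u)) = (fun x y => pd [false;false;true;true] u x y + pd [false;false;false;false] u x y).
Proof.
  transitivity (Dy (fun x y => pd [false;true;true] u x y + pd [false;false;false] u x y)).
  f_equal. exact (DyL u Hu).
  exact (Dy_plus (pd [false;true;true] u) (pd [false;false;false] u) (ckd u Hu [false;true;true] ltac:(simpl; lia)) (ckd u Hu [false;false;false] ltac:(simpl; lia))).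
Qed.


Lemma C2L (u : R -> R -> R) (Hu : Ck 4 u) : C2 (Lap u).
Proof.
  split.
  - exact (exd_plus _ _ (ckd u Hu [true;true] ltac:(simpl; lia)) (ckd u Hu [false;false] ltac:(simpl; lia))).
  - rewrite (DxL u Hu). exact (exd_plus _ _ (ckd u Hu [true;true;true] ltac:(simpl; lia)) (ckd u Hu [true;false;false] ltac:(simpl; lia))).
  - rewrite (DyL u Hu). exact (exd_plus _ _ (ckd u Hu [false;true;true] ltac:(simpl; lia)) (ckd u Hu [false;false;false] ltac:(simpl; lia))).
  - exact (cont2_plus _ _ (ckc u Hu [true;true] ltac:(simpl; lia)) (ckc u Hu [false;false] ltac:(simpl; lia))).
  - rewrite (DxL u Hu). exact (cont2_plus _ _ (ckc u Hu [true;true;true] ltac:(simpl; lia)) (ckc u Hu [true;false;false] ltac:(simpl; lia))).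
  - rewrite (DyL u Hu). exact (cont2_plus _ _ (ckc u Hu [false;true;true] ltac:(simpl; lia)) (ckc u Hu [false;false;false] ltac:(simpl; lia))).
  - rewrite (DxDxL u Hu). exact (cont2_plus _ _ (ckc u Hu [true;true;true;true] ltac:(simpl; lia)) (ckc u Hu [true;true;false;false] ltac:(simpl; lia))).
  - rewrite (DyDxL u Hu). exact (cont2_plus _ _ (ckc u Hu [false;true;true;true] ltac:(simpl; lia)) (ckc u Hu [false;true;false;false] ltac:(simpl; lia))).
  - rewrite (DxDyL u Hu). exact (cont2_plus _ _ (ckc u Hu [true;false;true;true] ltac:(simpl; lia)) (ckc u Hu [true;false;false;false] ltac:(simpl; lia))).
  - rewrite (DyDyL u Hu). exact (cont2_plus _ _ (ckc u Hu [false;false;true;true] ltac:(simpl; lia)) (ckc u Hu [false;false;false;false] ltac:(simpl; lia))).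
Qed.

Lemma cont2_LL (u : R -> R -> R) (Hu : Ck 4 u) : cont2 (Lap (Lap u)).
Proof. apply cont2_Lap, (C2L u Hu). Qed.

Lemma isd_mult' (f g : R -> R) x df dg : is_derive f x df -> is_derive g x dg ->
  is_derive (fun t => f t * g t) x (df * g x + f x * dg).
Proof. intros H1 H2. exact (is_derive_mult f g x df dg H1 H2 Rmult_comm). Qed.
Lemma isd_plus' (f g : R -> R) x df dg : is_derive f x df -> is_derive g x dg ->
  is_derive (fun t => f t + g t) x (df + dg).
Proof. intros H1 H2. exact (is_derive_plus f g x df dg H1 H2). Qed.
Lemma isd_eq' (f : R -> R) (x l l' : R) : is_derive f x l -> l = l' -> is_derive f x l'.
Proof. intros H E; subst; exact H. Qed.

Lemma mvt (f df : R -> R) a b : a < b -> (forall c, a <= c <= b -> is_derive f c (df c)) ->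
  exists c, f b - f a = df c * (b - a) /\ a < c < b.
Proof.
  intros Hab H. apply MVT_cor2; auto. intros c Hc. apply is_derive_Reals. auto.
Qed.

Definition ODEH (F F1 F2 W W1 W2 G : R -> R) : Prop :=
  (forall r, is_derive F r (F1 r)) /\ (forall r, is_derive F1 r (F2 r)) /\
  (forall r, is_derive W r (W1 r)) /\ (forall r, is_derive W1 r (W2 r)) /\
  (forall r, r <> 0 -> r * F2 r + F1 r = r * W r) /\
  (forall r, r <> 0 -> r * W2 r + W1 r = r * G r) /\
  (forall r, G r < 0) /\ (forall r, 0 < F r) /\ F1 0 = 0.

Definition V3 (F1 W W1 : R -> R) r := W1 r - W r / r + 2 * F1 r / r^2.

Lemma W1neg F F1 F2 W W1 W2 G (H : ODEH F F1 F2 W W1 W2 G) r : 0 < r -> W1 r < 0.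
Proof.
  pose proof H as HH; destruct HH as (dF & dF1 & dW & dW1 & idF & idW & Gneg & Fpos & F10).
  intros Hr.
  destruct (mvt (fun s => s * W1 s) (fun s => 1 * W1 s + s * W2 s) 0 r Hr) as [c [Hc1 Hc2]].
  { intros c _. apply isd_mult'. apply (is_derive_id c). apply dW1. }
  assert (E : c * W2 c + W1 c = c * G c) by (apply idW; lra).
  pose proof (Gneg c).
  assert (Hcg : c * G c < 0) by (apply Rmult_pos_neg; lra).
  assert (Hd : 1 * W1 c + c * W2 c < 0) by lra.
  assert (r * W1 r < 0).
  { replace (r * W1 r) with ((1 * W1 c + c * W2 c) * (r - 0)) by lra.
    apply Rmult_neg_pos; lra. }
  nra.
Qed.


Lemma dF2 F F1 F2 W W1 W2 G (H : ODEH F F1 F2 W W1 W2 G) r : 0 < r -> is_derive F2 r (V3 F1 W W1 r).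
Proof.
  pose proof H as HH; destruct HH as (dF & dF1 & dW & dW1 & idF & idW & Gneg & Fpos & F10).
  intros Hr.
  apply (is_derive_ext_loc (fun s => W s + (-1) * (F1 s * / s))).
  { apply (locally_interval _ r 0 p_infty). simpl; lra. simpl; auto.
    intros y Hy _. simpl in Hy. pose proof (idF y ltac:(lra)).
    change (W y + -1 * (F1 y * / y) = F2 y).
    assert (E: y * F2 y = y * W y - F1 y) by lra.
    replace (F2 y) with ((y * F2 y) / y) by (field; lra). rewrite E. field. lra. }
  assert (Hi : is_derive (fun s => / s) r (- / r^2)).
  { auto_derive. lra. field. lra. }
  eapply isd_eq'. apply isd_plus'. apply dW.
  apply (is_derive_scal (fun s => F1 s * / s)).
  apply isd_mult'. apply dF1. exact Hi.
  unfold V3. pose proof (idF r ltac:(lra)).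
  assert (E: r * F2 r = r * W r - F1 r) by lra.
  replace (F2 r) with ((r * F2 r) / r) by (field; lra). rewrite E. field. lra.
Qed.

Lemma V3neg F F1 F2 W W1 W2 G (H : ODEH F F1 F2 W W1 W2 G) r : 0 < r -> V3 F1 W W1 r < 0.
Proof.
  pose proof H as HH; destruct HH as (dF & dF1 & dW & dW1 & idF & idW & Gneg & Fpos & F10).
  intros Hr.
  set (N := fun s => s^3/2 * W1 s + (- s^2) * W s + (2*s) * F1 s).
  set (dN := fun s => (3*s^2/2) * W1 s + s^3/2 * W2 s + ((-(2*s)) * W s + (- s^2) * W1 s)
                      + (2 * F1 s + (2*s) * F2 s)).
  destruct (mvt N dN 0 r Hr) as [c [Hc1 Hc2]].
  { intros c _. unfold N, dN. eapply isd_eq'.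
    apply isd_plus'. apply isd_plus'.
    apply isd_mult'. 2: apply dW1. auto_derive; auto.
    apply isd_mult'. 2: apply dW. auto_derive; auto.
    apply isd_mult'. 2: apply dF1. auto_derive; auto.
    cbv beta. field. }
  assert (E1 : c * W2 c + W1 c = c * G c) by (apply idW; lra).
  assert (E2 : c * F2 c + F1 c = c * W c) by (apply idF; lra).
  assert (EdN : dN c = c^3/2 * G c).
  { unfold dN; cbv beta.
    replace (c^3/2 * G c) with (c^2/2 * (c * G c)) by field.
    rewrite <- E1. replace (2 * F1 c + (2*c) * F2 c) with (2 * (c * F2 c + F1 c)) by field.
    rewrite E2. field. }
  rewrite EdN in Hc1.
  assert (N0 : N 0 = 0) by (unfold N; cbv beta; field).
  pose proof (Gneg c).
  assert (HN : N r < 0).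
  { assert (0 < c^3) by (apply pow_lt; lra).
    assert (c^3/2 * G c < 0).
    { replace (c^3/2 * G c) with ((c^3/2) * G c) by field. apply Rmult_pos_neg; lra. }
    assert (c^3/2 * G c * (r - 0) < 0) by (apply Rmult_neg_pos; lra).
    lra. }
  pose proof (W1neg _ _ _ _ _ _ _ H r Hr).
  unfold N in HN. unfold V3.
  assert (0 < r^3) by (apply pow_lt; lra).
  assert (E : r^3 * (W1 r - W r / r + 2 * F1 r / r^2) = (r ^ 3 / 2 * W1 r + - r ^ 2 * W r + 2 * r * F1 r) + r^3/2 * W1 r)
    by (field; lra).
  assert (r^3 * (W1 r - W r / r + 2 * F1 r / r^2) < 0) by nra.
  nra.
Qed.

Lemma F2dec F F1 F2 W W1 W2 G (H : ODEH F F1 F2 W W1 W2 G) a b : 0 < a -> a < b -> F2 b < F2 a.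
Proof.
  pose proof H as HH; destruct HH as (dF & dF1 & dW & dW1 & idF & idW & Gneg & Fpos & F10).
  intros Ha Hab.
  destruct (mvt F2 (V3 F1 W W1) a b Hab) as [c [Hc1 Hc2]].
  { intros c Hc. apply (dF2 _ _ _ _ _ _ _ H). lra. }
  pose proof (V3neg _ _ _ _ _ _ _ H c ltac:(lra)). nra.
Qed.

Lemma F2pos F F1 F2 W W1 W2 G (H : ODEH F F1 F2 W W1 W2 G) r : 0 < r -> 0 < F2 r.
Proof.
  pose proof H as HH; destruct HH as (dF & dF1 & dW & dW1 & idF & idW & Gneg & Fpos & F10).
  intros Hr. destruct (Rlt_le_dec 0 (F2 r)) as [Hf|Hf]; auto. exfalso.
  set (r1 := r + 1).
  assert (H1 : F2 r1 < F2 r) by (apply (F2dec _ _ _ _ _ _ _ H); unfold r1; lra).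
  set (c0 := - F2 r1).
  assert (Hc0 : 0 < c0) by (unfold c0; lra).
  assert (Hh : forall s, r1 < s -> F1 s + c0 * s <= F1 r1 + c0 * r1).
  { intros s Hs.
    destruct (mvt (fun s => F1 s + c0 * s) (fun s => F2 s + c0) r1 s Hs) as [c [Hc1 Hc2]].
    { intros c _. eapply isd_eq'. apply isd_plus'. apply dF1.
      apply (is_derive_scal (fun s => s)). apply (is_derive_id c). unfold one; simpl. field. }
    assert (F2 c < F2 r1) by (apply (F2dec _ _ _ _ _ _ _ H); unfold r1 in *; lra).
    unfold c0 in *. nra. }
  assert (Hk : forall s, r1 < s -> F s + (- F1 r1) * s + c0 * ((s - r1)^2 / 2) <= F r1 + (- F1 r1) * r1).
  { intros s Hs.
    destruct (mvt (fun s => F s + (- F1 r1) * s + c0 * ((s - r1)^2 / 2))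
                  (fun s => F1 s - F1 r1 + c0 * (s - r1)) r1 s Hs) as [c [Hc1 Hc2]].
    { intros c _. eapply isd_eq'. apply isd_plus'. apply isd_plus'. apply dF.
      apply (is_derive_scal (fun s => s) c (- F1 r1)). apply (is_derive_id c).
      apply (is_derive_scal (fun s => (s - r1)^2/2)). auto_derive; auto.
      cbv beta. unfold one; simpl. field. }
    pose proof (Hh c ltac:(lra)).
    assert (Hd : F1 c - F1 r1 + c0 * (c - r1) <= 0) by lra.
    assert ((F1 c - F1 r1 + c0 * (c - r1)) * (s - r1) <= 0).
    { apply Rmult_le_0_r; lra. }
    replace (F r1 + - F1 r1 * r1) with (F r1 + - F1 r1 * r1 + c0 * ((r1 - r1)^2/2)) by field.
    lra. }
  set (A := F1 r1). set (B := F r1).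
  set (t := 1 + 2 * (Rabs A + Rabs B + 1) / c0).
  assert (Ht1 : 1 <= t).
  { unfold t. assert (0 <= 2 * (Rabs A + Rabs B + 1) / c0).
    { apply Rmult_le_pos. pose proof (Rabs_pos A); pose proof (Rabs_pos B); lra.
      left; apply Rinv_0_lt_compat; auto. }
    lra. }
  assert (Ht2 : c0 * t / 2 >= Rabs A + Rabs B + 1).
  { unfold t. replace (c0 * (1 + 2 * (Rabs A + Rabs B + 1) / c0) / 2)
      with (c0/2 + (Rabs A + Rabs B + 1)) by (field; lra). lra. }
  pose proof (Hk (r1 + t) ltac:(lra)).
  pose proof (Fpos (r1 + t)).
  replace (r1 + t - r1) with t in H0 by field.
  fold A B in H0.
  assert (A * t <= Rabs A * t) by (apply Rmult_le_compat_r; [lra | apply Rle_abs]).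
  assert (B <= Rabs B * t).
  { pose proof (Rle_abs B). pose proof (Rabs_pos B). nra. }
  assert (c0 * t^2/2 >= t * (Rabs A + Rabs B + 1)) by nra.
  nra.
Qed.

Lemma F1pos F F1 F2 W W1 W2 G (H : ODEH F F1 F2 W W1 W2 G) r : 0 < r -> 0 < F1 r.
Proof.
  pose proof H as HH; destruct HH as (dF & dF1 & dW & dW1 & idF & idW & Gneg & Fpos & F10).
  intros Hr.
  destruct (mvt F1 F2 0 r Hr) as [c [Hc1 Hc2]].
  { intros c _. apply dF1. }
  pose proof (F2pos _ _ _ _ _ _ _ H c ltac:(lra)). rewrite F10 in Hc1. nra.
Qed.

Theorem mainTheorem13 (q : R) (u : R -> R -> R) :
  0 < q ->
  Ck 4 u ->
  (forall x y : R, 0 < u x y) ->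
  (forall x y : R, Lap (Lap u) x y + Rpower (u x y) (- q) = 0) ->
  forall r : R, 0 < r ->
    0 < Derive (sph_avg u) r /\
    0 < Derive_n (sph_avg u) 2 r /\
    Derive_n (sph_avg u) 3 r < 0 /\
    Derive (sph_avg (Lap u)) r < 0.
Proof.
  intros Hq Hu Hpos Heq r Hr.
  pose proof (C2u u Hu) as Cu. pose proof (C2L u Hu) as CL.
  pose proof PI_RGT_0 as HPI.
  assert (Gneg : forall s, sph_avg (Lap (Lap u)) s < 0).
  { intro s. unfold sph_avg.
    assert (HI : RInt (fun th => Lap (Lap u) (s * cos th) (s * sin th)) 0 (2*PI) < 0).
    { eapply Rlt_le_trans.
      apply (RInt_lt _ (fun _ => 0)). lra.
      - intros; apply continuous_const.
      - intros x _. apply (cont2_t (polar (Lap (Lap u)))). apply cont2_p, (cont2_LL u Hu).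
      - intros x _. pose proof (Heq (s * cos x) (s * sin x)).
        assert (0 < Rpower (u (s * cos x) (s * sin x)) (- q)) by (unfold Rpower; apply exp_pos).
        lra.
      - rewrite RInt_const. unfold scal; simpl. unfold mult; simpl. lra. }
    unfold Rdiv. apply Rmult_neg_pos; auto. apply Rinv_0_lt_compat; lra. }
  assert (Fpos : forall s, 0 < sph_avg u s).
  { intro s. unfold sph_avg. unfold Rdiv. apply Rmult_lt_0_compat.
    2: apply Rinv_0_lt_compat; lra.
    apply RInt_gt_0. lra.
    - intros; apply Hpos.
    - intros x _. apply (cont2_t (polar u)). apply cont2_p, Cu. }
  assert (HO : ODEH (sph_avg u) (A1 u) (A2 u) (sph_avg (Lap u)) (A1 (Lap u)) (A2 (Lap u))
                    (sph_avg (Lap (Lap u)))).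
  { refine (conj _ (conj _ (conj _ (conj _ (conj _ (conj _ (conj Gneg (conj Fpos _)))))))).
    - intro s. exact (L1 u s Cu).
    - intro s. exact (L2 u s Cu).
    - intro s. exact (L1 (Lap u) s CL).
    - intro s. exact (L2 (Lap u) s CL).
    - intros s Hs. exact (L3 u s Cu Hs).
    - intros s Hs. exact (L3 (Lap u) s CL Hs).
    - exact (A1_0 u Cu). }
  assert (D1 : forall s, Derive (sph_avg u) s = A1 u s).
  { intro s. apply is_derive_unique. apply L1, Cu. }
  assert (D2 : forall s, Derive_n (sph_avg u) 2 s = A2 u s).
  { intro s. simpl. rewrite (Derive_ext _ (A1 u) s).
    apply is_derive_unique. apply L2, Cu. intro t. apply D1. }
  assert (D3 : Derive_n (sph_avg u) 3 r = V3 (A1 u) (sph_avg (Lap u)) (A1 (Lap u)) r).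
  { change (Derive (Derive_n (sph_avg u) 2) r = V3 (A1 u) (sph_avg (Lap u)) (A1 (Lap u)) r).
    rewrite (Derive_ext _ (A2 u) r D2).
    apply is_derive_unique. apply (dF2 _ _ _ _ _ _ _ HO r Hr). }
  assert (DW : Derive (sph_avg (Lap u)) r = A1 (Lap u) r).
  { apply is_derive_unique. apply L1, CL. }
  rewrite D1, D2, D3, DW.
  split. apply (F1pos _ _ _ _ _ _ _ HO r Hr).
  split. apply (F2pos _ _ _ _ _ _ _ HO r Hr).
  split. apply (V3neg _ _ _ _ _ _ _ HO r Hr).
  apply (W1neg _ _ _ _ _ _ _ HO r Hr).
Qed.
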